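(* Suppose Assumptions 1, 2, 3 and 6 hold. Then for every sufficiently large $n$, $$R_n(\mathbf w_n^* )\ \ge\ \tfrac12\,R_n(m_n^* ),$$ and consequently $R_n(m_n^* )\asymp R_n(\mathbf w_n^* )$ (equivalently, $\Delta_n\le \tfrac12 R_n(m_n^* )$ for all large $n$). No restriction on the number $M_n$ of candidate models is needed.
   Context: Setting. For each sample size $n$ one observes $\mathbf y=\boldsymbol\mu+\boldsymbol\varepsilon\in\mathbb R^n$ with $\boldsymbol\mu=\mathbf X\boldsymbol\beta$, where $\mathbf X=(x_{ij})$ is a nonstochastic $n\times p_n$ matrix with $p_n<n$, $\boldsymbol\beta\in\mathbb R^{p_n}$, $E(\boldsymbol\varepsilon)=\mathbf 0$ and $\mathrm{Cov}(\boldsymbol\varepsilon)=\boldsymbol\Omega$ positive definite (all of these may depend on $n$). Fix integers $0=\nu_0<\nu_1<\cdots<\nu_{q_n}=p_n$. For $m=1,\dots,q_n$, $\mathbf X_m$ denotes the $n\times\nu_m$ matrix formed by the first $\nu_m$ columns of $\mathbf X$ (assumed of full column rank), $\mathbf P_m=\mathbf X_m(\mathbf X_m^\top\mathbf X_m)^{-1}\mathbf X_m^\top$, and $\mathbf P_0=\mathbf 0$. The candidate (nested) models are $m\in\{1,\dots,M_n\}$ with $2\le M_n\le q_n$. For a model $m$, $\hat{\boldsymbol\mu}_m=\mathbf P_m\mathbf y$ and $R_n(m)=E\|\hat{\boldsymbol\mu}_m-\boldsymbol\mu\|^2$. For $\mathbf w=(w_1,\dots,w_{M_n})^\top$, $\mathbf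 P(\mathbf w)=\sum_{m=1}^{M_n}w_m\mathbf P_m$, $\hat{\boldsymbol\mu}(\mathbf w)=\mathbf P(\mathbf w)\mathbf y$ and $R_n(\mathbf w)=E\|\hat{\boldsymbol\mu}(\mathbf w)-\boldsymbol\mu\|^2$. Let $\mathcal W_n=\{\mathbf w\in[0,1]^{M_n}:\sum_{m}w_m=1\}$. Let $m_n^*$ be the minimizer of $R_n(m)$ over $\{1,\dots,M_n\}$, $m_n^{**}$ the minimizer of $R_n(m)$ over $\{1,\dots,q_n\}$, and $\mathbf w_n^*$ the minimizer of $R_n(\mathbf w)$ over $\mathcal W_n$ (all assumed unique). Put $\Delta_n=R_n(m_n^* )-R_n(\mathbf w_n^* )$. Grouped variable importance: for $m=1,\dots,q_n$, $$\theta_{n,m}=\frac{n^{-1}\boldsymbol\mu^\top(\mathbf P_m-\mathbf P_{m-1})\boldsymbol\mu}{\mathrm{tr}\{(\mathbf P_m-\mathbf P_{m-1})\boldsymbol\Omega\}},$$ and $d_n=\max\{m\in\{1,\dots,q_n\}:\theta_{n,m}>0\}$. Assumption 1: $\|\boldsymbol\mu\|^2/n=O(1)$. Assumption 2: there are constants $0<c_1\le c_2<\infty$ with $c_1<\lambda_{\min}(\boldsymbol\Omega)\le\lambda_{\max}(\boldsymbol\Omega)<c_2$ for all $n$. Assumption 3: for each sufficiently large $n$, $\theta_{n,1}\ge\theta_{n,2}\ge\cdots\ge\theta_{n,q_n}$. Assumption 6: for each sufficiently large $n$, $R_n(m)$ is first decreasing and then increasing as $m$ runs from $1$ to $d_n$: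 there is $m_n'\in\{1,\dots,d_n-1\}$ with $R_n(m)<R_n(m-1)$ for $2\le m\le m_n'$, $R_n(m)\ge R_n(m-1)$ for $m_n'<m\le d_n$, and $R_n(d_n)>R_n(d_n-1)$. Notation: for positive deterministic sequences, $a_n\asymp b_n$ means $a_n/b_n$ and $b_n/a_n$ are both bounded for all large $n$. *)

(* Defs.v *)
From HB Require Import structures.
From mathcomp Require Import all_boot all_order all_algebra.
From mathcomp Require Import all_classical all_reals all_analysis.
Set Implicit Arguments. Unset Strict Implicit. Unset Printing Implicit Defensive.
Import Order.TTheory GRing.Theory Num.Theory.
Local Open Scope ring_scope.

Section Defs.
Variable R : realType.

(* X_k : the n x k matrix formed by the first k columns of X (k <= p). *)
Definition colsfirst (n p : nat) (X : 'M[R]_(n, p)) (k : nat) : 'M[R]_(n, k) :=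
  \matrix_(i < n, j < k) oapp (X i) 0 (insub (val j) : option 'I_p).

Definition projmx (n k : nat) (A : 'M[R]_(n, k)) : 'M[R]_n :=
  A *m invmx (A^T *m A) *m A^T.

(* P_m, with nu m = nu_m ; P_0 = 0 automatically since nu 0 = 0 *)
Definition Pm (n p : nat) (X : 'M[R]_(n, p)) (nu : nat -> nat) (m : nat) : 'M[R]_n :=
  projmx (colsfirst X (nu m)).

(* P(w) = sum_{m=1}^{M} w_m P_m ; weight of model m is w 0 (m-1) *)
Definition Pw (n p : nat) (X : 'M[R]_(n, p)) (nu : nat -> nat) (M : nat)
  (w : 'rV[R]_M) : 'M[R]_n :=
  \sum_(m < M) w 0 m *: Pm X nu m.+1.

Definition in_simplex (M : nat) (w : 'rV[R]_M) : Prop :=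
  (forall m : 'I_M, 0 <= w 0 m <= 1) /\ \sum_(m < M) w 0 m = 1.

Definition theta (n p : nat) (X : 'M[R]_(n, p)) (nu : nat -> nat)
  (mu : 'cV[R]_n) (Omega : 'M[R]_n) (m : nat) : R :=
  (n%:R^-1 * (mu^T *m (Pm X nu m - Pm X nu m.-1) *m mu) 0 0)
  / \tr ((Pm X nu m - Pm X nu m.-1) *m Omega).

(* d_n = max { m in 1..q : theta_m > 0 }  (0 if the set is empty) *)
Definition dn (n p : nat) (X : 'M[R]_(n, p)) (nu : nat -> nat)
  (mu : 'cV[R]_n) (Omega : 'M[R]_n) (q : nat) : nat :=
  (\max_(1 <= m < q.+1 | (0 < theta X nu mu Omega m)%R) m)%N.

Definition sqnorm (n : nat) (v : 'cV[R]_n) : R := \sum_(i < n) v i 0 ^+ 2.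

Definition risk d (T : measurableType d) (P : probability T R) (n : nat)
  (mu : 'cV[R]_n) (eps : 'I_n -> T -> R) (A : 'M[R]_n) : \bar R :=
  ('E_P[fun t => sqnorm (A *m (mu + \col_i eps i t) - mu)])%E.

End Defs.

(* Main.v *)
Require Import Defs.
From HB Require Import structures.
From mathcomp Require Import all_boot all_order all_algebra.
From mathcomp Require Import all_classical all_reals all_analysis.
From mathcomp Require Import ring lra.
Import Order.TTheory GRing.Theory Num.Theory.
Local Open Scope ring_scope.
Section Alg.
Context {R : realType}.
Lemma sq_sum n (x : R) (y : 'I_n -> R) :
  (x + \sum_k y k) ^+ 2 = x ^+ 2 + \sum_k (2 * x * y k) + \sum_k \sum_l (y k * y l).
Proof.
rewrite sqrrD; congr (_ + _ + _).
  by rewrite -mulr_natl mulrA mulr_sumr.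
by rewrite expr2 big_distrl /=; apply: eq_bigr => k _; rewrite big_distrr.
Qed.
End Alg.
Section Alg2.
Context {R : realType}.
Lemma sqnorm_expand n (A : 'M[R]_n) (mu e : 'cV[R]_n) :
 sqnorm (A *m (mu + e) - mu) = sqnorm (A *m mu - mu)
  + \sum_k e k 0 * (2 * \sum_i (A *m mu - mu) i 0 * A i k)
  + \sum_k \sum_l (e k 0 * e l 0) * (\sum_i A i k * A i l).
Proof.
set c := (A *m mu - mu)%R.
have -> : A *m (mu + e) - mu = c + A *m e by rewrite /c mulmxDr addrAC.
rewrite /sqnorm.
under eq_bigr => i _ do rewrite mxE [(A *m e) i 0]mxE sq_sum.
rewrite !big_split /=; congr (_ + _ + _).
  rewrite exchange_big /=; apply: eq_bigr => k _.
  rewrite !mulr_sumr; apply: eq_bigr => i _; rewrite /=; ring.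
rewrite exchange_big /=; apply: eq_bigr => k _.
rewrite exchange_big /=; apply: eq_bigr => l _.
rewrite !mulr_sumr; apply: eq_bigr => i _; ring.
Qed.
End Alg2.
Section Alg3.
Context {R : realType}.
Lemma tr_expand n (A Om : 'M[R]_n) :
  \tr (A *m Om *m A^T) = \sum_k \sum_l Om k l * (\sum_i A i k * A i l).
Proof.
rewrite /mxtrace.
under eq_bigr => i _ do (rewrite mxE; under eq_bigr => l _ do rewrite !mxE big_distrl /=).
rewrite exchange_big /=.
under eq_bigr => l _ do rewrite exchange_big /=.
rewrite exchange_big /=; apply: eq_bigr => k _; apply: eq_bigr => l _.
rewrite mulr_sumr; apply: eq_bigr => i _; ring.
Qed.
End Alg3.

Section Prob.
Context {R : realType} d (T : measurableType d) (P : probability T R).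
Local Open Scope ereal_scope.

Lemma E_sum (I : finType) (f : I -> T -> R) : (forall i, f i \in Lfun P 1) ->
  'E_P[fun t => (\sum_i f i t)%R] = \sum_i 'E_P[f i] /\ (fun t => (\sum_i f i t)%R) \in Lfun P 1.
Proof.
move=> Hf; rewrite -fct_sumE; elim/big_rec2: _ => [|i x y _ [Hy Hx]].
  split; last exact: rpred0.
  by rewrite (_ : 0%R = cst 0%R) // expectation_cst.
split; last by apply: rpredD.
by rewrite expectationD // Hy.
Qed.

Lemma risk_formula n (mu : 'cV[R]_n) (eps : 'I_n -> T -> R) (Om : 'M[R]_n) (A : 'M[R]_n) :
  (forall i, eps i \in Lfun P 2%:E /\ 'E_P[eps i] = 0) ->
  (forall i j, covariance P (eps i) (eps j) = (Om i j)%:E) ->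
  risk P mu eps A = (sqnorm (A *m mu - mu) + \tr (A *m Om *m A^T))%:E.
Proof.
move=> H1 Hc; rewrite /risk.
have Pfin : P setT \is a fin_num := fin_num_measure P _ measurableT.
have L1 k : eps k \in Lfun P 1 by apply: (Lfun_subset12 Pfin); case: (H1 k).
have L11 k l : (eps k \* eps l)%R \in Lfun P 1 by apply: Lfun2_mul_Lfun1; [case: (H1 k)|case: (H1 l)].
have EE k l : 'E_P[(eps k \* eps l)%R] = (Om k l)%:E.
  have := covarianceE (L1 k) (L1 l) (L11 k l).
  by rewrite Hc (proj2 (H1 k)) (proj2 (H1 l)) mule0 sube0 => <-.
rewrite /risk.
set c := (A *m mu - mu)%R.
set al := fun k => (2 * \sum_i c i 0 * A i k)%R.
set be := fun k l => (\sum_i A i k * A i l)%R.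
have -> : (fun t => sqnorm (A *m (mu + \col_i eps i t) - mu)) =
  ((cst (sqnorm c) \+ (fun t => \sum_k (al k \o* eps k) t)) \+ (fun t => \sum_k (fun t => \sum_l (be k l \o* (eps k \* eps l)) t) t))%R.
  apply/funext => t; rewrite sqnorm_expand /= -/c.
  by congr (_ + _ + _)%R; apply: eq_bigr => k _; rewrite !mxE //; apply: eq_bigr => l _; rewrite !mxE.
have Lal k : (al k \o* eps k)%R \in Lfun P 1 by apply: Lfun_scale => //; exact: L1.
have Lbe k l : (be k l \o* (eps k \* eps l))%R \in Lfun P 1 by apply: Lfun_scale => //; exact: L11.
have [E1 M1] := E_sum _ (fun k => (al k \o* eps k)%R) Lal.
have Ein k := E_sum _ (fun l => (be k l \o* (eps k \* eps l))%R) (Lbe k).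
have [E2 M2] := E_sum _ (fun k t => (\sum_l (be k l \o* (eps k \* eps l)) t)%R) (fun k => proj2 (Ein k)).
rewrite expectationD //; last by apply: rpredD => //; exact: Lfun_cst.
rewrite expectationD //; last exact: Lfun_cst.
rewrite expectation_cst E1 E2.
under eq_bigr => k _ do rewrite expectationZl // (proj2 (H1 k)) mule0.
rewrite big1_eq adde0.
under eq_bigr => k _ do (rewrite (proj1 (Ein k)); under eq_bigr => l _ do rewrite expectationZl // EE).
rewrite tr_expand EFinD; congr (_ + _).
rewrite -sumEFin; apply: eq_bigr => k _; rewrite -sumEFin; apply: eq_bigr => l _.
by rewrite -EFinM mulrC.
Qed.
End Prob.
Section Scal.
Context {R : realType}.

Lemma mono_prop (a b : nat -> R) M :
  (forall j, (j < M)%N -> 0 < b j) ->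
  (forall i, (i.+1 < M)%N -> a i.+1 * b i <= a i * b i.+1) ->
  forall dd j, (j + dd < M)%N -> b (j + dd)%N < a (j + dd)%N -> b j < a j.
Proof.
move=> Hb Hm; elim=> [|dd IH] j Hj H; first by rewrite addn0 in H.
have e : (j + dd.+1 = j.+1 + dd)%N by rewrite addSnnS.
rewrite e in Hj H.
have H1 : b j.+1 < a j.+1 by apply: IH.
have j1 : (j.+1 < M)%N by apply: leq_ltn_trans Hj; exact: leq_addr.
have b0 := Hb j (ltnW j1).
have b1 := Hb j.+1 j1.
have := Hm j j1.
move=> h; nra.
Qed.

Lemma keyb (a b g : R) : b <= a -> 0 <= b -> b <= 2 * ((1 - g) ^+ 2 * a + g ^+ 2 * b).
Proof.
move=> ba b0.
have h1 : 0 <= (1 - g) ^+ 2 * (a - b) by apply: mulr_ge0; [exact: sqr_ge0| rewrite subr_ge0].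
have h2 : 0 <= b * (2 * g - 1) ^+ 2 by apply: mulr_ge0; [|exact: sqr_ge0].
nra.
Qed.

Lemma keya (a b g : R) : a <= b -> 0 <= a -> a <= 2 * ((1 - g) ^+ 2 * a + g ^+ 2 * b).
Proof.
move=> ba b0.
have h1 : 0 <= g ^+ 2 * (b - a) by apply: mulr_ge0; [exact: sqr_ge0| rewrite subr_ge0].
have h2 : 0 <= a * (2 * g - 1) ^+ 2 by apply: mulr_ge0; [|exact: sqr_ge0].
nra.
Qed.

Lemma choose_k M (a b : nat -> R) : (0 < M)%N ->
  (forall j, (j < M)%N -> 0 <= a j) -> (forall j, (j < M)%N -> 0 < b j) ->
  (forall i, (i.+1 < M)%N -> a i.+1 * b i <= a i * b i.+1) ->
  exists k, (k < M)%N /\ forall g : nat -> R, g 0%N = 1 ->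
   \sum_(j < M) (if (j <= k)%N then b j else a j)
     <= 2 * \sum_(j < M) ((1 - g j) ^+ 2 * a j + g j ^+ 2 * b j).
Proof.
move=> M0 Ha Hb Hm.
pose k := (\max_(j < M | (b j < a j)%R) (j : nat))%N.
have kM : (k < M)%N.
  case: M M0 Ha Hb Hm @k => // M' _ _ _ _ /=.
  rewrite ltnS; apply/bigmax_leqP => i _; rewrite -ltnS; exact: ltn_ord.
have kP : k = 0%N \/ (b k < a k).
  rewrite /k; elim/big_ind: _ => [|x y Hx Hy|i Hi]; [by left| |by right].
  by case: (leqP x y) => h; rewrite ?(maxn_idPr h) ?(maxn_idPl (ltnW h)).
exists k; split => // g g0.
rewrite mulr_sumr; apply: ler_sum => j _.
have jM := ltn_ord j.
have aj := Ha j jM; have bj := Hb j jM.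
case: ifP => hjk.
  case: (posnP j) => [j0|j0]; first by rewrite j0 g0 in bj *; nra.
  have hk : b k < a k by case: kP => // k0; move: hjk; rewrite k0 leqn0 => /eqP hj; rewrite hj in j0.
  have : b j < a j.
    apply: (@mono_prop a b M Hb Hm (k - j)%N j); rewrite subnKC //.
  move=> h; apply: keyb; [exact: ltW h| exact: ltW].
have : a j <= b j.
  rewrite leNgt; apply/negP => h.
  have := @leq_bigmax_cond _ (fun i : 'I_M => (b i < a i)%R) (fun i : 'I_M => (i : nat)) j h.
  rewrite -/k; move=> hh; move: hjk; rewrite hh //.
move=> h; exact: keya.
Qed.
End Scal.
Section Scal2.
Context {R : realType}.

Lemma gamma_identity M (A B : nat -> R) (w : 'I_M -> R) (S : R) : A 0%N = 0 -> B 0%N = 0 ->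
 let a j := A j.+1 - A j in let b j := B j.+1 - B j in
 let g (j : nat) := \sum_(m < M) (if (j <= m)%N then w m else 0) in
 S - 2 * \sum_(m<M) w m * A m.+1 + \sum_(m<M) \sum_(l<M) w m * w l * (A (minn m l).+1 + B (minn m l).+1)
 = (S - A M) + \sum_(j < M) ((1 - g j)^+2 * a j + g j ^+ 2 * b j).
Proof.
move=> A0 B0 a b g.
have tele (C : nat -> R) k : C 0%N = 0 -> (k <= M)%N -> C k = \sum_(j < M) (if (j < k)%N then C j.+1 - C j else 0).
  move=> C0 kM; rewrite -big_mkcond /= -(big_ord_widen _ (fun j => C j.+1 - C j) kM).
  by rewrite -(big_mkord xpredT (fun j => C j.+1 - C j)) telescope_sumr // C0 subr0.
have s1 (C : nat -> R) : C 0%N = 0 -> \sum_(m<M) w m * C m.+1 = \sum_(j<M) g j * (C j.+1 - C j).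
  move=> C0; under eq_bigr => m _ do rewrite (tele C m.+1 C0 (ltn_ord m)) mulr_sumr.
  rewrite exchange_big /=; apply: eq_bigr => j _; rewrite mulr_suml; apply: eq_bigr => m _.
  by rewrite ltnS; case: ifP; rewrite ?mulr0 ?mul0r.
have s2 (C : nat -> R) : C 0%N = 0 -> \sum_(m<M) \sum_(l<M) w m * w l * C (minn m l).+1 = \sum_(j<M) g j ^+ 2 * (C j.+1 - C j).
  move=> C0.
  under eq_bigr => m _ do (under eq_bigr => l _ do rewrite (tele C (minn m l).+1 C0 (leq_ltn_trans (geq_minl m l) (ltn_ord m))) mulr_sumr; rewrite exchange_big /=).
  rewrite exchange_big /=; apply: eq_bigr => j _.
  rewrite exchange_big /=.
  rewrite expr2 -mulrA mulr_suml; apply: eq_bigr => m _; rewrite /g mulr_suml mulr_sumr; apply: eq_bigr => l _.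
  rewrite ltnS leq_min; case: (j <= l)%N; case: (j <= m)%N => /=; ring.
have -> : \sum_(m<M) \sum_(l<M) w m * w l * (A (minn m l).+1 + B (minn m l).+1) =
   \sum_(m<M) \sum_(l<M) w m * w l * A (minn m l).+1 + \sum_(m<M) \sum_(l<M) w m * w l * B (minn m l).+1.
  rewrite -big_split /=; apply: eq_bigr => m _; rewrite -big_split /=; apply: eq_bigr => l _.
  by rewrite mulrDr.
rewrite (s1 A A0) (s2 A A0) (s2 B B0) (tele A M A0 (leqnn M)).
rewrite mulr_sumr -!addrA; congr (_ + _).
rewrite -!sumrN !addrA -!big_split /=; apply: eq_bigr => j _.
rewrite ltn_ord /a /b; ring.
Qed.
End Scal2.
Section LA.
Context {R : realType}.

Lemma projmx_sym n k (A : 'M[R]_(n, k)) : (projmx A)^T = projmx A.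
Proof. by rewrite /projmx !trmx_mul trmxK trmx_inv trmx_mul trmxK mulmxA. Qed.

Lemma projmx0 n k (A : 'M[R]_(n, k)) : k = 0%N -> projmx A = 0.
Proof.
move=> k0; subst k; rewrite /projmx (_ : A = 0); first by rewrite !mul0mx.
by apply/matrixP => i [].
Qed.

Lemma gram_unit n k (A : 'M[R]_(n, k)) : \rank A = k -> A^T *m A \in unitmx.
Proof.
move=> rA; rewrite -row_free_unit; apply: inj_row_free => v Hv.
set u := v *m A^T.
have uu : (u *m u^T) 0 0 = 0.
  by rewrite /u trmx_mul trmxK mulmxA -(mulmxA v) Hv mul0mx mxE.
have u0 : u = 0.
  apply/matrixP => i j; rewrite (ord1 i) [RHS]mxE.
  move: uu; rewrite mxE => /psumr_eq0P h.
  have := h (fun i _ => ltac:(by rewrite [u^T _ _]mxE -expr2 sqr_ge0)) j isT.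
  by rewrite [u^T _ _]mxE => /eqP; rewrite mulf_eq0 => /orP[]/eqP.
apply/eqP; rewrite -(mulmx_free_eq0 _ (B := A^T)); first by rewrite -/u u0.
by rewrite -row_leq_rank mxrank_tr rA.
Qed.

Lemma projmx_id n k (A : 'M[R]_(n, k)) : A^T *m A \in unitmx -> projmx A *m A = A.
Proof. by move=> U; rewrite /projmx -!mulmxA mulVmx // mulmx1. Qed.

Lemma projmx_absorb n k (Q : 'M[R]_n) (B : 'M[R]_(n, k)) : Q *m B = B -> Q *m projmx B = projmx B.
Proof. by move=> H; rewrite /projmx !mulmxA H. Qed.

Lemma rank_projmx n k (A : 'M[R]_(n, k)) : (\rank (projmx A) <= k)%N.
Proof. by rewrite /projmx -mulmxA (leq_trans (mxrankM_maxl _ _)) // rank_leq_col. Qed.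

Lemma colsfirst_nest n p (X : 'M[R]_(n, p)) k l : (k <= l)%N ->
  colsfirst X k = colsfirst X l *m \matrix_(i < l, j < k) ((i : nat) == j)%:R.
Proof.
move=> kl; apply/matrixP => r j; rewrite !mxE (bigD1 (widen_ord kl j)) //= big1.
  by rewrite !mxE eqxx mulr1 addr0.
move=> i /negPf hi; rewrite !mxE.
suff -> : ((i : nat) == j) = false by rewrite mulr0.
apply/negbTE; apply: contraFN hi => /eqP e; apply/eqP/val_inj => //.
Qed.
End LA.
Section PPf.
Context {R : realType}.

Lemma nu_mono (nu : nat -> nat) q : (forall m, (m < q)%N -> (nu m < nu m.+1)%N) ->
  forall m l, (m <= l <= q)%N -> (nu m <= nu l)%N.
Proof.
move=> H m l /andP[ml lq]; elim: l ml lq => [|l IH] ml lq.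
  by rewrite leqn0 in ml; rewrite (eqP ml).
case: (ltngtP m l.+1) ml => // [h _|-> _ //].
by apply: leq_trans (IH h (ltnW lq)) (ltnW (H l lq)).
Qed.

Lemma PP_facts n p (X : 'M[R]_(n, p)) (nu : nat -> nat) q :
  nu 0%N = 0%N -> (forall m, (m < q)%N -> (nu m < nu m.+1)%N) ->
  (forall m, (1 <= m <= q)%N -> \rank (colsfirst X (nu m)) = nu m) ->
  [/\ Pm X nu 0 = 0, forall m, (Pm X nu m)^T = Pm X nu m,
      forall m l, (m <= q)%N -> (l <= q)%N -> Pm X nu m *m Pm X nu l = Pm X nu (minn m l) &
      forall j, (0 < j <= q)%N -> Pm X nu j != Pm X nu j.-1].
Proof.
move=> nu0 Hnu Hr.
have P0 : Pm X nu 0 = 0 by rewrite /Pm projmx0.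
have Psym m : (Pm X nu m)^T = Pm X nu m by rewrite /Pm projmx_sym.
have key m l : (m <= l <= q)%N -> Pm X nu l *m Pm X nu m = Pm X nu m.
  move=> /andP[ml lq]; case: (posnP m) => [->|m0]; first by rewrite P0 mulmx0.
  have l1 : (1 <= l <= q)%N by rewrite lq (leq_trans m0 ml).
  rewrite /Pm; apply: projmx_absorb.
  rewrite (@colsfirst_nest R n p X (nu m) (nu l) (@nu_mono nu q Hnu m l _)); last by rewrite ml lq.
  by rewrite mulmxA projmx_id // gram_unit // Hr.
split => //.
- move=> m l mq lq; case: (leqP m l) => h.
    rewrite -[LHS]trmxK trmx_mul !Psym key ?Psym // h lq //.
  by rewrite key // (ltnW h) mq.
- move=> j /andP[j0 jq]; apply/eqP => E.
  have rj : \rank (colsfirst X (nu j)) = nu j by apply: Hr; rewrite j0 jq.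
  have e1 : Pm X nu j.-1 *m colsfirst X (nu j) = colsfirst X (nu j).
    by rewrite -E /Pm projmx_id // gram_unit.
  have h1 := mxrankM_maxl (Pm X nu j.-1) (colsfirst X (nu j)).
  rewrite e1 rj in h1.
  have h2 := @rank_projmx R n _ (colsfirst X (nu j.-1)).
  have jq1 : (j.-1 < q)%N by rewrite prednK.
  have h3 := Hnu j.-1 jq1.
  rewrite prednK // in h3.
  have := leq_trans h1 h2; rewrite /Pm in h1 *.
  by rewrite leqNgt h3.
Qed.
End PPf.
Section Core.
Context {R : realType}.
Definition quad {n} (mu : 'cV[R]_n) (Q : 'M[R]_n) : R := (mu^T *m Q *m mu) 0 0.

Lemma entryD m n (X Y : 'M[R]_(m, n)) i j : (X + Y) i j = X i j + Y i j.
Proof. by rewrite !mxE. Qed.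
Lemma entryB m n (X Y : 'M[R]_(m, n)) i j : (X - Y) i j = X i j - Y i j.
Proof. by rewrite !mxE. Qed.

Lemma quadB n (mu : 'cV[R]_n) (P Q : 'M[R]_n) : quad mu (P - Q) = quad mu P - quad mu Q.
Proof. by rewrite /quad mulmxBr mulmxBl entryB. Qed.
Lemma quadD n (mu : 'cV[R]_n) (P Q : 'M[R]_n) : quad mu (P + Q) = quad mu P + quad mu Q.
Proof. by rewrite /quad mulmxDr mulmxDl entryD. Qed.

Lemma quad_sum n (mu : 'cV[R]_n) (I : finType) (c : I -> R) (Q : I -> 'M[R]_n) :
  quad mu (\sum_i c i *: Q i) = \sum_i c i * quad mu (Q i).
Proof.
rewrite /quad mulmx_sumr mulmx_suml summxE; apply: eq_bigr => i _.
by rewrite -scalemxAr -scalemxAl mxE.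
Qed.

Lemma tr_sum n (Om : 'M[R]_n) (I : finType) (c : I -> R) (Q : I -> 'M[R]_n) :
  \tr ((\sum_i c i *: Q i) *m Om) = \sum_i c i * \tr (Q i *m Om).
Proof.
rewrite mulmx_suml raddf_sum; apply: eq_bigr => i _.
by rewrite /= -scalemxAl mxtraceZ.
Qed.

Lemma sqnorm_quad n (v : 'cV[R]_n) : sqnorm v = (v^T *m v) 0 0.
Proof. by rewrite /sqnorm mxE; apply: eq_bigr => i _; rewrite mxE expr2. Qed.

Lemma quad_nonneg n (mu : 'cV[R]_n) (D : 'M[R]_n) : D^T = D -> D *m D = D -> 0 <= quad mu D.
Proof.
move=> Ds Di; rewrite /quad -{1}Di -{1}Ds mulmxA -mulmxA -trmx_mul -sqnorm_quad.
by apply: sumr_ge0 => i _; exact: sqr_ge0.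
Qed.

Lemma trace_pos n (Om D : 'M[R]_n) : D^T = D -> D *m D = D -> D != 0 ->
  (forall v : 'cV[R]_n, v != 0 -> 0 < (v^T *m Om *m v) 0 0) -> 0 < \tr (D *m Om).
Proof.
move=> Ds Di D0 PD.
have -> : \tr (D *m Om) = \tr (D *m Om *m D^T) by rewrite [RHS]mxtrace_mulC mulmxA Ds Di.
have E i : (D *m Om *m D^T) i i = ((row i D)^T^T *m Om *m (row i D)^T) 0 0.
  rewrite trmxK !mxE; apply: eq_bigr => l _; rewrite !mxE; congr (_ * _).
  by apply: eq_bigr => k _; rewrite !mxE.
have G i : 0 <= (D *m Om *m D^T) i i.
  rewrite E; case: (eqVneq (row i D)^T 0) => [->|h]; first by rewrite trmx0 !mul0mx mxE.
  exact: ltW (PD _ h).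
have [i0 hi0] : exists i, row i D != 0.
  apply/existsP; apply: contraR D0 => /existsPn h; apply/eqP/row_matrixP => i.
  by rewrite row0; apply/eqP; have := h i; rewrite negbK.
rewrite /mxtrace (bigD1 i0) //=; apply: ltr_wpDr; first by apply: sumr_ge0 => i _; exact: G.
by rewrite E PD // trmx_eq0.
Qed.
End Core.
Section Core2.
Context {R : realType}.

Lemma F_expand n (mu : 'cV[R]_n) (Om : 'M[R]_n) (PP : nat -> 'M[R]_n) M (w : 'I_M -> R) :
 (forall m, (m <= M)%N -> (PP m)^T = PP m) ->
 (forall m l, (m <= M)%N -> (l <= M)%N -> PP m *m PP l = PP (minn m l)) ->
 let G := \sum_(m < M) w m *: PP m.+1 in
 sqnorm (G *m mu - mu) + \tr (G *m Om *m G^T) =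
 quad mu 1%:M - 2 * \sum_(m < M) w m * quad mu (PP m.+1)
  + \sum_(m < M) \sum_(l < M) w m * w l * (quad mu (PP (minn m l).+1) + \tr (PP (minn m l).+1 *m Om)).
Proof.
move=> Hs Hm G.
have GT : G^T = G.
  rewrite /G raddf_sum; apply: eq_bigr => m _ /=; rewrite linearZ /= Hs //.
have GG : G *m G = \sum_(m < M) \sum_(l < M) (w m * w l) *: PP (minn m l).+1.
  rewrite /G mulmx_suml; apply: eq_bigr => m _; rewrite mulmx_sumr; apply: eq_bigr => l _.
  by rewrite -scalemxAl -scalemxAr scalerA Hm // minnSS mulrC.
have -> : G *m mu - mu = (G - 1%:M) *m mu by rewrite mulmxBl mul1mx.
have qE (Q : 'M[R]_n) : (mu^T *m Q *m mu) 0 0 = quad mu Q by [].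
have G1 : (G - 1%:M)^T *m (G - 1%:M) = G *m G - G - G + 1%:M.
  have T1 : (G - 1%:M)^T = G - 1%:M by rewrite [(G - _)^T]raddfB /= trmx1 GT.
  rewrite T1 mulmxBl !mulmxBr !mulmx1 !mul1mx.
  by rewrite opprB addrA addrAC.
rewrite sqnorm_quad trmx_mul mulmxA -(mulmxA (mu^T)) qE G1 quadD !quadB GG.
have tE : \tr (G *m Om *m G^T) = \sum_(m < M) \sum_(l < M) w m * w l * \tr (PP (minn m l).+1 *m Om).
  rewrite GT mxtrace_mulC mulmxA GG mulmx_suml raddf_sum; apply: eq_bigr => m _ /=.
  rewrite mulmx_suml raddf_sum; apply: eq_bigr => l _ /=.
  by rewrite -scalemxAl mxtraceZ.
rewrite tE.
have -> : quad mu (\sum_(m < M) \sum_(l < M) (w m * w l) *: PP (minn m l).+1) =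
   \sum_(m < M) \sum_(l < M) w m * w l * quad mu (PP (minn m l).+1).
  have qs (I : finType) (Q : I -> 'M[R]_n) : quad mu (\sum_i Q i) = \sum_i quad mu (Q i).
    by rewrite /quad mulmx_sumr mulmx_suml summxE.
  rewrite qs; apply: eq_bigr => m _; rewrite qs; apply: eq_bigr => l _.
  by rewrite /quad -scalemxAr -scalemxAl mxE.
rewrite /G quad_sum -/G.
have -> : \sum_(m < M) \sum_(l < M) w m * w l * (quad mu (PP (minn m l).+1) + \tr (PP (minn m l).+1 *m Om))
  = \sum_(m < M) \sum_(l < M) w m * w l * quad mu (PP (minn m l).+1) + \sum_(m < M) \sum_(l < M) w m * w l * \tr (PP (minn m l).+1 *m Om).
  rewrite -big_split /=; apply: eq_bigr => m _; rewrite -big_split /=; apply: eq_bigr => l _.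
  by rewrite mulrDr.
ring.
Qed.
End Core2.

Section Final.
Context {R : realType}.

Definition Fv {n} (mu : 'cV[R]_n) (Om G : 'M[R]_n) := sqnorm (G *m mu - mu) + \tr (G *m Om *m G^T).
Definition thP {n} (mu : 'cV[R]_n) (Om : 'M[R]_n) (PP : nat -> 'M[R]_n) (nn : R) (m : nat) : R :=
  (nn^-1 * (mu^T *m (PP m - PP m.-1) *m mu) 0 0) / \tr ((PP m - PP m.-1) *m Om).

Lemma ratio (x a0 a1 b0 b1 : R) : 0 < x -> 0 < b0 -> 0 < b1 -> x * a1 / b1 <= x * a0 / b0 -> a1 * b0 <= a0 * b1.
Proof.
move=> x0 b00 b10 h.
have c0 : 0 < x / (b0 * b1) by apply: divr_gt0 => //; exact: mulr_gt0.
have e1 : x * a1 / b1 = (a1 * b0) * (x / (b0 * b1)) by field; apply/andP; split; exact: lt0r_neq0.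
have e0 : x * a0 / b0 = (a0 * b1) * (x / (b0 * b1)) by field; apply/andP; split; exact: lt0r_neq0.
by rewrite e1 e0 ler_pM2r in h.
Qed.

Lemma idemB n (P1 P0 : 'M[R]_n) : P1 *m P1 = P1 -> P1 *m P0 = P0 -> P0 *m P1 = P0 -> P0 *m P0 = P0 ->
  (P1 - P0) *m (P1 - P0) = P1 - P0.
Proof.
move=> h11 h10 h01 h00; rewrite mulmxBl !mulmxBr h11 h10 h01 h00.
by rewrite subrr subr0.
Qed.

Lemma core n (mu : 'cV[R]_n) (Om : 'M[R]_n) (PP : nat -> 'M[R]_n) M (nn : R) :
 (2 <= M)%N -> PP 0%N = 0 ->
 (forall m, (m <= M)%N -> (PP m)^T = PP m) ->
 (forall m l, (m <= M)%N -> (l <= M)%N -> PP m *m PP l = PP (minn m l)) ->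
 (forall j, (0 < j <= M)%N -> PP j != PP j.-1) ->
 (forall v : 'cV[R]_n, v != 0 -> 0 < (v^T *m Om *m v) 0 0) -> 0 < nn ->
 (forall m, (1 <= m < M)%N -> thP mu Om PP nn m.+1 <= thP mu Om PP nn m) ->
 exists k : 'I_M, forall wr : 'rV[R]_M, in_simplex wr ->
   Fv mu Om (\sum_(m < M) (\row_i ((i == k)%:R : R)) 0 m *: PP m.+1)
     <= 2 * Fv mu Om (\sum_(m < M) wr 0 m *: PP m.+1).
Proof.
move=> M2 P0 Hs Hm Hne PD nn0 Hth.
pose A k := quad mu (PP k); pose B k := \tr (PP k *m Om).
have A0 : A 0%N = 0 by rewrite /A P0 /quad mulmx0 mul0mx mxE.
have B0 : B 0%N = 0 by rewrite /B P0 mul0mx mxtrace0.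
pose a j := A j.+1 - A j; pose b j := B j.+1 - B j.
have Dsym j : (j < M)%N -> (PP j.+1 - PP j)^T = PP j.+1 - PP j.
  by move=> jM; rewrite [(_ - _)^T]raddfB /= !Hs // ltnW.
have Didem j : (j < M)%N -> (PP j.+1 - PP j) *m (PP j.+1 - PP j) = PP j.+1 - PP j.
  move=> jM; apply: idemB; rewrite Hm // ?(ltnW jM) //.
  - by rewrite minnn.
  - by rewrite (minn_idPr (leqnSn j)).
  - by rewrite (minn_idPl (leqnSn j)).
  - by rewrite minnn.
have aE j : a j = quad mu (PP j.+1 - PP j) by rewrite quadB.
have bE j : b j = \tr ((PP j.+1 - PP j) *m Om) by rewrite mulmxBl raddfB.
have ha j : (j < M)%N -> 0 <= a j by move=> jM; rewrite aE; apply: quad_nonneg; [exact: Dsym|exact: Didem].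
have hb j : (j < M)%N -> 0 < b j.
  move=> jM; rewrite bE; apply: trace_pos => //; [exact: Dsym|exact: Didem|].
  by rewrite subr_eq0; apply: (Hne j.+1).
have ht : 0 <= quad mu 1%:M - A M.
  rewrite /A -quadB; apply: quad_nonneg.
    by rewrite [(_ - _)^T]raddfB /= trmx1 Hs.
  by rewrite mulmxBl !mulmxBr !mulmx1 !mul1mx Hm // minnn subrr subr0.
have hmono i : (i.+1 < M)%N -> a i.+1 * b i <= a i * b i.+1.
  move=> iM; have := Hth i.+1; rewrite /thP /= => h.
  apply: (@ratio nn^-1 (a i) (a i.+1) (b i) (b i.+1)); [by rewrite invr_gt0|exact: hb (ltnW iM)|exact: hb|].
  rewrite !aE !bE; apply: h; by rewrite iM.
have M0 : (0 < M)%N by apply: leq_trans M2.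
have [k [kM Hk]] := @choose_k R M a b M0 ha hb hmono.
have Fg (wr : 'rV[R]_M) : Fv mu Om (\sum_(m < M) wr 0 m *: PP m.+1) =
   (quad mu 1%:M - A M) + \sum_(j < M) ((1 - (\sum_(m < M) (if (j <= m)%N then wr 0 m else 0))) ^+ 2 * a j
      + (\sum_(m < M) (if (j <= m)%N then wr 0 m else 0)) ^+ 2 * b j).
  rewrite /Fv (@F_expand R n mu Om PP M (fun m => wr 0 m) Hs Hm).
  exact: (gamma_identity M A B (fun m => wr 0 m) (quad mu 1%:M) A0 B0).
exists (Ordinal kM) => wr [_ ws].
rewrite !Fg.
have ge j : \sum_(m < M) (if (j <= m)%N then (\row_i (((i == Ordinal kM) %:R) : R)) 0 m else 0)
   = if (j <= k)%N then 1 else 0.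
  rewrite (bigD1 (Ordinal kM)) //= big1 ?addr0.
    by rewrite mxE eqxx.
  by move=> m /negPf hm; rewrite mxE hm; case: ifP.
have -> : \sum_(j < M) ((1 - \sum_(m < M) (if (j <= m)%N then (\row_i (((i == Ordinal kM) %:R) : R)) 0 m else 0)) ^+ 2 * a j
   + (\sum_(m < M) (if (j <= m)%N then (\row_i (((i == Ordinal kM) %:R) : R)) 0 m else 0)) ^+ 2 * b j)
   = \sum_(j < M) (if (j <= k)%N then b j else a j).
  apply: eq_bigr => j _; rewrite ge; case: ifP => _.
    by rewrite subrr expr0n /= mul0r add0r expr1n mul1r.
  by rewrite subr0 expr1n mul1r expr0n /= mul0r addr0.
have g0 : (fun j : nat => \sum_(m < M) (if (j <= m)%N then wr 0 m else 0)) 0%N = 1.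
  by rewrite /= -ws; apply: eq_bigr.
have := Hk (fun j : nat => \sum_(m < M) (if (j <= m)%N then wr 0 m else 0)) g0; rewrite /=.
move: ht; set t := quad mu 1%:M - A M; set s1 := \sum_(j < M) _; set s2 := \sum_(j < M) _.
move=> ht h; lra.
Qed.
End Final.
Section Main.
Context {R : realType}.
Lemma Pw_e n p (X : 'M[R]_(n, p)) nu M (k : 'I_M) :
  Pw X nu (\row_i (((i == k)%:R) : R)) = Pm X nu k.+1.
Proof.
rewrite /Pw (bigD1 k) //= big1 ?addr0; first by rewrite mxE eqxx scale1r.
by move=> m /negPf hm; rewrite mxE hm scale0r.
Qed.
Lemma simplex_e M (k : 'I_M) : in_simplex (\row_i (((i == k)%:R) : R)).
Proof.
split.
  by move=> m; rewrite mxE; case: (m == k); rewrite /= ?ler01 ?lexx // ler01.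
rewrite (bigD1 k) //= big1 ?addr0; first by rewrite mxE eqxx.
by move=> m /negPf hm; rewrite mxE hm.
Qed.
End Main.
Theorem theorem1 (R : realType) (d : measure_display) (T : measurableType d)
  (P : probability T R)
  (p q M : nat -> nat) (nu : nat -> nat -> nat)
  (X : forall n : nat, 'M[R]_(n, p n)) (beta : forall n : nat, 'cV[R]_(p n))
  (Omega : forall n : nat, 'M[R]_n) (eps : forall n : nat, 'I_n -> T -> R)
  (mstar : nat -> nat) (wstar : forall n : nat, 'rV[R]_(M n)) (N0 : nat) :
  (* setting, for every n >= N0 *)
  (forall n, (N0 <= n)%N -> (p n < n)%N) ->
  (forall n, (N0 <= n)%N ->
     nu n 0%N = 0%N /\ (forall m, (m < q n)%N -> (nu n m < nu n m.+1)%N) /\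
     nu n (q n) = p n) ->
  (forall n, (N0 <= n)%N -> forall m, (1 <= m <= q n)%N ->
     \rank (colsfirst (X n) (nu n m)) = nu n m) ->
  (forall n, (N0 <= n)%N -> (2 <= M n <= q n)%N) ->
  (forall n, (N0 <= n)%N -> forall i : 'I_n,
     eps n i \in Lfun P 2%:E /\ ('E_P[eps n i] = 0)%E) ->
  (forall n, (N0 <= n)%N -> forall i j : 'I_n,
     covariance P (eps n i) (eps n j) = (Omega n i j)%:E) ->
  (forall n, (N0 <= n)%N -> forall v : 'cV[R]_n,
     v != 0 -> 0 < (v^T *m Omega n *m v) 0 0) ->
  (* m_n^* : unique minimizer of R_n(m) over {1..M_n} *)
  (forall n, (N0 <= n)%N ->
     (1 <= mstar n <= M n)%N /\
     forall m, (1 <= m <= M n)%N -> m <> mstar n ->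
       (risk P (X n *m beta n) (eps n) (Pm (X n) (nu n) (mstar n))
        < risk P (X n *m beta n) (eps n) (Pm (X n) (nu n) m))%E) ->
  (* w_n^* : unique minimizer of R_n(w) over W_n *)
  (forall n, (N0 <= n)%N ->
     in_simplex (wstar n) /\
     forall w : 'rV[R]_(M n), in_simplex w -> w <> wstar n ->
       (risk P (X n *m beta n) (eps n) (Pw (X n) (nu n) (wstar n))
        < risk P (X n *m beta n) (eps n) (Pw (X n) (nu n) w))%E) ->
  (* Assumption 1 *)
  (exists C : R, exists N : nat, forall n, (N <= n)%N ->
     sqnorm (X n *m beta n) / n%:R <= C) ->
  (* Assumption 2 *)
  (exists c1 c2 : R, 0 < c1 /\ c1 <= c2 /\
     forall n, (N0 <= n)%N -> forall a : R, eigenvalue (Omega n) a ->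
       c1 < a /\ a < c2) ->
  (* Assumption 3 *)
  (exists N : nat, forall n, (N <= n)%N -> forall m, (1 <= m < q n)%N ->
     theta (X n) (nu n) (X n *m beta n) (Omega n) m.+1
       <= theta (X n) (nu n) (X n *m beta n) (Omega n) m) ->
  (* Assumption 6 *)
  (exists N : nat, forall n, (N <= n)%N ->
     let Rn := fun m => risk P (X n *m beta n) (eps n) (Pm (X n) (nu n) m) in
     let dd := dn (X n) (nu n) (X n *m beta n) (Omega n) (q n) in
     exists m', (1 <= m' <= dd - 1)%N /\
       (forall m, (2 <= m <= m')%N -> (Rn m < Rn (m - 1)%N)%E) /\
       (forall m, (m' < m <= dd)%N -> (Rn (m - 1)%N <= Rn m)%E) /\
       (Rn (dd - 1)%N < Rn dd)%E) ->
  (* conclusion: for all large n, R_n(m_star)/2 <= R_n(w_star) <= R_n(m_star) *)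
  exists N : nat, forall n, (N <= n)%N ->
    ((2^-1)%:E * risk P (X n *m beta n) (eps n) (Pm (X n) (nu n) (mstar n))
       <= risk P (X n *m beta n) (eps n) (Pw (X n) (nu n) (wstar n)))%E /\
    (risk P (X n *m beta n) (eps n) (Pw (X n) (nu n) (wstar n))
       <= risk P (X n *m beta n) (eps n) (Pm (X n) (nu n) (mstar n)))%E.
Proof.
move=> Hp Hnu Hrk HM Heps Hcov HPD Hms Hws _ _ [N3 H3] _.
exists (maxn N0 N3) => n; rewrite geq_max => /andP[n0 n3].
set mu := X n *m beta n.
have rf (A : 'M[R]_n) : risk P mu (eps n) A = (Fv mu (Omega n) A)%:E.
  exact: (@risk_formula R d T P n mu (eps n) (Omega n) A (Heps n n0) (Hcov n n0)).
have [nu0 [Hstep nuq]] := Hnu n n0.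
have [P0 Psym Pmin Pne] := @PP_facts R n (p n) (X n) (nu n) (q n) nu0 Hstep (Hrk n n0).
have /andP[M2 Mq] := HM n n0.
have nn0 : 0 < (n%:R : R) by rewrite ltr0n; apply: leq_ltn_trans (Hp n n0).
have [k Hk] := @core R n mu (Omega n) (Pm (X n) (nu n)) (M n) n%:R M2 P0
  (fun m _ => Psym m)
  (fun m l hm hl => Pmin m l (leq_trans hm Mq) (leq_trans hl Mq))
  (fun j hj => Pne j (ltac:(case/andP: hj => h1 h2; by rewrite h1 (leq_trans h2 Mq))))
  (HPD n n0) nn0
  (fun m hm => H3 n n3 m (ltac:(case/andP: hm => h1 h2; by rewrite h1 (leq_trans h2 Mq)))).
have [ws Hwmin] := Hws n n0.
have [/andP[m1 mM] Hmmin] := Hms n n0.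
split.
  rewrite !rf -EFinM lee_fin.
  have h1 := Hk (wstar n) ws.
  have h2 : Fv mu (Omega n) (Pm (X n) (nu n) (mstar n)) <= Fv mu (Omega n) (Pm (X n) (nu n) k.+1).
    case: (eqVneq k.+1 (mstar n)) => [<-//|hne].
    have := Hmmin k.+1 (ltn_ord k) (elimN eqP hne) .
    by rewrite !rf lte_fin => /ltW.
  rewrite -(@Pw_e R n (p n) (X n) (nu n) (M n) k) in h2.
  rewrite /Pw in h2; lra.
have mM' : ((mstar n).-1 < M n)%N by rewrite prednK.
pose e := \row_i ((i == Ordinal mM') %:R : R).
have Ee : Pw (X n) (nu n) e = Pm (X n) (nu n) (mstar n).
  by rewrite /e (@Pw_e R n (p n) (X n) (nu n) (M n) (Ordinal mM')) /= prednK.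
rewrite -Ee; case: (eqVneq e (wstar n)) => [<-|hne]; first exact: lexx.
apply/ltW/Hwmin; first exact: simplex_e.
exact: (elimN eqP hne).
Qed.
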